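(* Let $\varphi\colon G\twoheadrightarrow Q$ be an epimorphism from a finitely generated group $G$ to a group $Q$, and let $\varphi^*\colon H^1(Q,\mathbb{Q})\hookrightarrow H^1(G,\mathbb{Q})$ be the induced monomorphism. Then for each $r\ge1$ the induced map $\varphi^*_r\colon\operatorname{Grass}_r(H^1(Q,\mathbb{Q}))\hookrightarrow\operatorname{Grass}_r(H^1(G,\mathbb{Q}))$ maps $\operatorname{Grass}_r(H^1(Q,\mathbb{Q}))\setminus\Omega^1_r(Q)$ into $\operatorname{Grass}_r(H^1(G,\mathbb{Q}))\setminus\Omega^1_r(G)$.
   Context: For a finitely generated group $H$ and an epimorphism $\nu\colon H\twoheadrightarrow\mathbb{Z}^r$, let $P_\nu=\operatorname{im}(\nu^*\colon\mathbb{Q}^r\to H^1(H,\mathbb{Q}))$; every rational $r$-plane in $H^1(H,\mathbb{Q})$ is of this form. The Dwyer–Fried sets of $H$ are $\Omega^i_r(H)=\{P_\nu\in\operatorname{Grass}_r(H^1(H,\mathbb{Q}))\mid b_j(\ker\nu)<\infty\ \text{for all } j\le i\}$, where $b_j$ denotes the $j$-th rational Betti number of the group (equivalently of the $\mathbb{Z}^r$-cover of $K(H,1)$ determined by $\nu$); by convention this is empty if $r>b_1(H)$. *)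

(* Defs.v *)
(* groups are given as an explicit record,
   since MathComp has no theory of possibly-infinite groups. *)
From HB Require Import structures.
From mathcomp Require Import all_boot all_order all_algebra.
From Stdlib Require List.
Set Implicit Arguments. Unset Strict Implicit. Unset Printing Implicit Defensive.
Import Order.TTheory GRing.Theory Num.Theory.
Local Open Scope ring_scope.

Record grp := Grp {
  car :> Type;
  gmul : car -> car -> car;
  gone : car;
  ginv : car -> car;
  gmulA : forall x y z, gmul x (gmul y z) = gmul (gmul x y) z;
  gmul1l : forall x, gmul gone x = x;
  gmulVl : forall x, gmul (ginv x) x = gone
}.

Definition gzpow (G : grp) (x : G) (z : int) : G :=
  match z with
  | Posz n => iter n (gmul x) (gone G)
  | Negz n => iter n.+1 (gmul (ginv x)) (gone G)
  end.

Definition gprod (G : grp) (w : seq G) : G := foldr (@gmul G) (gone G) w.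

Definition is_hom (G H : grp) (f : G -> H) : Prop :=
  forall x y, f (gmul x y) = gmul (f x) (f y).

Definition is_epi (G H : grp) (f : G -> H) : Prop :=
  is_hom f /\ forall y : H, exists x : G, f x = y.

Definition fin_gen (G : grp) : Prop :=
  exists s : seq G, forall g : G, exists w : seq G,
    (forall x, List.In x w -> List.In x s \/ List.In (ginv x) s) /\ g = gprod w.

(* additive homomorphisms to Q : the elements of H^1(G, Q) = Hom(G, Q) *)
Definition H1hom (G : grp) (chi : G -> rat) : Prop :=
  forall x y, chi (gmul x y) = chi x + chi y.

(* an epimorphism nu : G ->> Z^r, given by its r coordinate homomorphisms *)
Definition epiZr (G : grp) (r : nat) (nu : 'I_r -> G -> int) : Prop :=
  (forall i x y, nu i (gmul x y) = nu i x + nu i y) /\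
  (forall v : 'I_r -> int, exists x : G, forall i, nu i x = v i).

Definition ker_nu (G : grp) (r : nat) (nu : 'I_r -> G -> int) (x : G) : Prop :=
  forall i, nu i x = 0.

Definition in_comm (G : grp) (K : G -> Prop) (x : G) : Prop :=
  exists ps : seq (G * G),
    (forall p, List.In p ps -> K p.1 /\ K p.2) /\
    x = gprod [seq gmul (ginv p.1) (gmul (ginv p.2) (gmul p.1 p.2)) | p <- ps].

(* b_1(K) = dim_Q H_1(K; Q) = dim_Q (K^ab (x) Q) < infinity, for a subgroup K:
   there are finitely many k_1..k_n in K whose classes span K^ab (x) Q, i.e.
   every k in K satisfies k^m * prod k_i^(a_i) in [K,K] for some m >= 1, a_i in Z. *)
Definition betti1_finite (G : grp) (K : G -> Prop) : Prop :=
  exists ks : seq G, (forall k, List.In k ks -> K k) /\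
    forall k, K k -> exists (m : nat) (a : seq int),
      (0 < m)%N /\ size a = size ks /\
      in_comm K (gmul (gzpow k (Posz m))
                      (gprod [seq gzpow p.1 p.2 | p <- zip ks a])).

(* b_0(K) = dim_Q H_0(K; Q) = 1 is always finite. *)
Definition betti0_finite (G : grp) (K : G -> Prop) : Prop := True.

Definition plane (G : grp) := (G -> rat) -> Prop.

(* P_nu = image of nu^* : Q^r -> H^1(G, Q) *)
Definition P_nu (G : grp) (r : nat) (nu : 'I_r -> G -> int) : plane G :=
  fun chi => exists q : 'I_r -> rat,
    forall x, chi x = \sum_(i < r) q i * (nu i x)%:~R.

Definition same_plane (G : grp) (P P' : plane G) : Prop :=
  forall chi, P chi <-> P' chi.

(* Grass_r(H^1(G,Q)): r-dimensional Q-linear subspaces of H^1(G,Q),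
   i.e. spans of r linearly independent homomorphisms G -> Q. *)
Definition span_of (G : grp) (r : nat) (chis : 'I_r -> G -> rat) : plane G :=
  fun chi => exists q : 'I_r -> rat,
    forall x, chi x = \sum_(i < r) q i * chis i x.

Definition in_Grass (G : grp) (r : nat) (P : plane G) : Prop :=
  exists chis : 'I_r -> G -> rat,
    (forall i, H1hom (chis i)) /\
    (forall q : 'I_r -> rat,
        (forall x, \sum_(i < r) q i * chis i x = 0) -> forall i, q i = 0) /\
    same_plane P (span_of chis).

(* Dwyer-Fried set Omega^i_r(G) for i = 1 (empty if r > b_1(G),
   automatically, since then no epimorphism G ->> Z^r exists). *)
Definition Omega1 (G : grp) (r : nat) (P : plane G) : Prop :=
  in_Grass r P /\
  exists nu : 'I_r -> G -> int, epiZr nu /\ same_plane P (P_nu nu) /\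
    betti0_finite (ker_nu nu) /\ betti1_finite (ker_nu nu).

Definition pullback_plane (G Q : grp) (phi : G -> Q) (P : plane Q) : plane G :=
  fun psi => exists chi, P chi /\ forall g, psi g = chi (phi g).

(* Main.v *)
Require Import Defs.
From HB Require Import structures.
From mathcomp Require Import all_boot all_order all_algebra.
From Stdlib Require Import ClassicalEpsilon FunctionalExtensionality.
From Stdlib Require List.
Import GRing.Theory Num.Theory.
Local Open Scope ring_scope.

Section Hom.
Variables (G Q : grp) (phi : G -> Q) (hphi : is_hom phi).

Lemma hom1 : phi (gone G) = gone Q.
Proof.
have E : phi (gone G) = gmul (phi (gone G)) (phi (gone G)).
  by rewrite -hphi gmul1l.
have := congr1 (gmul (ginv (phi (gone G)))) E.
by rewrite gmulA !gmulVl gmul1l => <-.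
Qed.

Lemma mulV (H : grp) (x : H) : gmul x (ginv x) = gone H.
Proof.
set y := gmul x (ginv x).
have yy : gmul y y = y by rewrite /y -gmulA [gmul (ginv x) _]gmulA gmulVl gmul1l.
have -> : y = gmul (gmul (ginv y) y) y by rewrite gmulVl gmul1l.
by rewrite -gmulA yy gmulVl.
Qed.

Lemma gmul1r (H : grp) (x : H) : gmul x (gone H) = x.
Proof. by rewrite -(gmulVl x) gmulA mulV gmul1l. Qed.

Lemma homV x : phi (ginv x) = ginv (phi x).
Proof.
have E : gmul (phi (ginv x)) (phi x) = gone Q by rewrite -hphi gmulVl hom1.
by rewrite -[phi (ginv x)]gmul1r -(@mulV Q (phi x)) gmulA E gmul1l.
Qed.

Lemma hom_iter n (y : G) z :
  phi (iter n (gmul y) z) = iter n (gmul (phi y)) (phi z).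
Proof. by elim: n => //= n IH; rewrite hphi IH. Qed.

Lemma hom_zpow x z : phi (gzpow x z) = gzpow (phi x) z.
Proof.
case: z => n /=; first by rewrite hom_iter hom1.
by rewrite hphi hom_iter homV hom1.
Qed.

Lemma hom_prod w : phi (gprod w) = gprod (map phi w).
Proof. by elim: w => [|a w IH] /=; [rewrite hom1 | rewrite hphi IH]. Qed.

Lemma hom_prod_zip (ks : seq G) (a : seq int) :
  phi (gprod [seq gzpow p.1 p.2 | p <- zip ks a]) =
  gprod [seq gzpow p.1 p.2 | p <- zip (map phi ks) a].
Proof.
elim: ks a => [|k ks IH] [|b a] /=; try by rewrite hom1.
by rewrite hphi hom_zpow IH.
Qed.

Lemma hom_comm (K : G -> Prop) (K' : Q -> Prop) x :
  (forall k, K k -> K' (phi k)) -> in_comm K x -> in_comm K' (phi x).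
Proof.
move=> hK [ps [hps ->]].
exists (map (fun p => (phi p.1, phi p.2)) ps); split.
  move=> p /List.in_map_iff [q [<- /hps [h1 h2]]] /=; split; exact: hK.
rewrite hom_prod -!map_comp; congr gprod; apply: eq_map => p /=.
by rewrite !hphi !homV.
Qed.

End Hom.

Theorem proposition4p13 (G Q : grp) (phi : G -> Q) :
  fin_gen G -> is_epi phi ->
  forall r : nat, (1 <= r)%N ->
  forall P : plane Q, in_Grass r P -> ~ Omega1 r P ->
    in_Grass r (pullback_plane phi P) /\ ~ Omega1 r (pullback_plane phi P).
Proof.
move=> _ [hphi sphi] r _ P hG nO.
have G1 : in_Grass r (pullback_plane phi P).
  case: hG => chis [hh [hind hsp]].
  exists (fun i x => chis i (phi x)); split; [|split].
  - by move=> i x y; rewrite /= hphi hh.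
  - move=> q hq i; apply: hind => y; have [x <-] := sphi y; exact: hq.
  - move=> psi; split.
      move=> [chi [/hsp [q hq] hpsi]]; exists q => x; by rewrite hpsi hq.
    move=> [q hq]; exists (fun y => \sum_(i < r) q i * chis i y); split.
      by apply/hsp; exists q.
    exact: hq.
split=> // [[_ [nu [[nuh nue] [hsame [_ hb1]]]]]].
apply: nO; split=> //.
have hchi : forall i : 'I_r, exists chi : Q -> rat,
    P chi /\ forall g, (nu i g)%:~R = chi (phi g).
  move=> i; have : P_nu nu (fun x => (nu i x)%:~R).
    exists (fun j => if j == i then 1 else 0) => x.
    rewrite (bigD1 i) //= eqxx mul1r big1 ?addr0 // => j /negbTE ->.
    by rewrite mul0r.
  by move/hsame => [chi [hP hc]]; exists chi.
pose chi i := proj1_sig (constructive_indefinite_description _ (hchi i)).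
have chiP i : P (chi i) /\ forall g, (nu i g)%:~R = chi i (phi g).
  exact: proj2_sig (constructive_indefinite_description _ (hchi i)).
pose nu' (i : 'I_r) (y : Q) : int := numq (chi i y).
have key i x : nu' i (phi x) = nu i x.
  by rewrite /nu' -(proj2 (chiP i)) numq_int.
exists nu'; split; [split|split; [|split=> //]].
- move=> i y1 y2; have [x1 <-] := sphi y1; have [x2 <-] := sphi y2.
  by rewrite -hphi !key nuh.
- move=> v; have [x hx] := nue v; exists (phi x) => i; by rewrite key.
- move=> c; split.
    move=> hc; have : pullback_plane phi P (fun x => c (phi x)).
      by exists c.
    move/hsame => [q hq]; exists q => y; have [x <-] := sphi y.
    rewrite hq; apply: eq_bigr => i _; by rewrite key.
  move=> [q hq]; have : P_nu nu (fun x => c (phi x)).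
    exists q => x; rewrite hq; apply: eq_bigr => i _; by rewrite key.
  move/hsame => [c' [hP hc']].
  have -> : c = c'; last by [].
  apply: functional_extensionality => y; have [x <-] := sphi y; exact: hc'.
- case: hb1 => ks [hks hk].
  exists (map phi ks); split.
    move=> k /List.in_map_iff [k0 [<- /hks hk0]] i; by rewrite key hk0.
  move=> k' hk'; have [x ex] := sphi k'.
  have hx : ker_nu nu x by move=> i; rewrite -key ex hk'.
  have [m [a [hm [hsz hc]]]] := hk x hx.
  exists m, a; split=> //; split; first by rewrite size_map.
  rewrite -ex -hom_zpow // -hom_prod_zip // -hphi.
  apply: (@hom_comm G Q phi hphi (ker_nu nu) _ _ _ hc) => k hk0 i; by rewrite key hk0.

Qed.
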